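(* Assume $\|\hat F'(y)-\hat F'(x)\|_F\le L_{\hat F}\|y-x\|$ for all $x,y\in\mathcal F$ and $\sigma_{\min}(\hat F'(x)^* )\ge\sqrt\mu$ for all $x\in\mathcal F$, some $\mu>0$. Then for the sequence $\{x_k\}$ generated by Scheme 2: $$\hat f_1(x_{k+1})\le\varepsilon_k+\begin{cases}\frac{L_{\hat F}}{\mu}\hat f_2(x_k)\le\frac12\hat f_1(x_k),&\text{if }\hat f_1(x_k)\le\frac{\mu}{2L_{\hat F}},\\ \hat f_1(x_k)-\frac{\mu}{4L_{\hat F}},&\text{otherwise}.\end{cases}$$ If $L_k=L_{\hat F}$ is fixed while generating the sequence, then $$\hat f_1(x_{k+1})\le\varepsilon_k+\begin{cases}\frac{L_{\hat F}}{2\mu}\hat f_2(x_k)\le\frac12\hat f_1(x_k),&\text{if }\hat f_1(x_k)\le\frac{\mu}{L_{\hat F}},\\ \hat f_1(x_k)-\frac{\mu}{2L_{\hat F}},&\text{otherwise}.\end{cases}$$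
   Context: Let $F:\mathbb R^n\to\mathbb R^m$ be smooth, $\hat F=\frac1{\sqrt m}F$ with Jacobian $\hat F'(x)$ and transpose $\hat F'(x)^*$; Euclidean norms, $\|\cdot\|_F$ Frobenius norm. $\hat f_1(x)=\|\hat F(x)\|$, $\hat f_2=\hat f_1^2$, $\phi(x,y)=\|\hat F(x)+\hat F'(x)(y-x)\|$, $\psi_{x,L,\tau}(y)=\frac\tau2+\frac{\phi(x,y)^2}{2\tau}+\frac L2\|y-x\|^2$, $T_{L,\tau}(x)=\arg\min_y\psi_{x,L,\tau}(y)$, $\mathcal T_L(x)=\arg\min_{\tau>0}\psi_{x,L,\tau}(T_{L,\tau}(x))$. $\mathcal F$ closed convex with nonempty interior, $\mathcal L(\hat f_1(x_0))\subseteq\mathcal F$ and the generated sequence stays in $\mathcal F$. Scheme 2 (input $x_0$; a rule choosing $\varepsilon_k\ge0$; $L\in(0,L_{\hat F}]$, $L_0=L$; a map $\mathcal X(x,L,\tau)$ approximating $T_{L,\tau}(x)$). For $k=0,1,\dots$: choose $\varepsilon_k$; find $\tau_k^*>0$ with $\psi_{x_k,L_k,\tau_k^*}(\mathcal X(x_k,L_k,\tau_k^* ))-\psi_{x_k,L_k,\mathcal T_{L_k}(x_k)}(T_{L_k,\mathcal T_{L_k}(x_k)}(x_k))\le\varepsilon_k$ and $\hat f_1(x_k)\ge\psi_{x_k,L_k,\tau_k^*}(\mathcal X(x_k,L_k,\tau_k^* ))$; set $x_{k+1}=\mathcal X(x_k,L_k,\tau_k^* )$; if $\hat f_1(x_{k+1})>\psi_{x_k,L_k,\tau_k^*}(x_{k+1})$,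 set $L_k:=\min\{2L_k,2L_{\hat F}\}$ and redo the search for $\tau_k^*$; otherwise $L_{k+1}=\max\{L_k/2,L\}$. *)

(* Defs.v *)
From HB Require Import structures.
From mathcomp Require Import all_boot all_order all_algebra.
From mathcomp Require Import all_classical all_reals all_analysis.
Set Implicit Arguments. Unset Strict Implicit. Unset Printing Implicit Defensive.
Import Order.TTheory GRing.Theory Num.Theory.
Import numFieldNormedType.Exports.
Local Open Scope classical_set_scope.
Local Open Scope ring_scope.

Section GaussNewton.
Variable R : realType.

Definition enorm (n : nat) (v : 'cV[R]_n) : R :=
  Num.sqrt (\sum_(i < n) v i 0 ^+ 2).

Definition frob (m n : nat) (A : 'M[R]_(m, n)) : R :=
  Num.sqrt (\sum_(i < m) \sum_(j < n) A i j ^+ 2).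

Definition sigma_min (q p : nat) (A : 'M[R]_(q, p)) : R :=
  inf [set enorm (A *m u) | u in [set u : 'cV[R]_p | enorm u = 1]].

Variables (n m : nat).
Variable F : 'cV[R]_n -> 'cV[R]_m.
Variable J : 'cV[R]_n -> 'M[R]_(m, n).

Definition Fhat (x : 'cV[R]_n) : 'cV[R]_m := (Num.sqrt (m%:R))^-1 *: F x.
Definition Jhat (x : 'cV[R]_n) : 'M[R]_(m, n) := (Num.sqrt (m%:R))^-1 *: J x.

Definition f1 (x : 'cV[R]_n) : R := enorm (Fhat x).
Definition f2 (x : 'cV[R]_n) : R := f1 x ^+ 2.

Definition phi (x y : 'cV[R]_n) : R := enorm (Fhat x + Jhat x *m (y - x)).

Definition psi (x : 'cV[R]_n) (L tau : R) (y : 'cV[R]_n) : R :=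
  tau / 2 + phi x y ^+ 2 / (2 * tau) + L / 2 * enorm (y - x) ^+ 2.

(* optimal value psi_{x,L,T_L(x)}(T_{L,T_L(x)}(x)) = inf over tau > 0 and y *)
Definition psi_opt (x : 'cV[R]_n) (L : R) : R :=
  inf [set r | exists tau y, 0 < tau /\ r = psi x L tau y].

Definition level_set (c : R) : set 'cV[R]_n := [set x | f1 x <= c].

Definition convex_set_E (S : set 'cV[R]_n) : Prop :=
  forall x y (t : R), S x -> S y -> 0 <= t <= 1 -> S (t *: x + (1 - t) *: y).

(* One successful search for tau^*: with weight Lc, tau^* = tau is found *)
Definition tau_search_ok (X : 'cV[R]_n -> R -> R -> 'cV[R]_n) (eps : R)
    (x : 'cV[R]_n) (Lc tau : R) : Prop :=
  0 < tau /\
  psi x Lc tau (X x Lc tau) - psi_opt x Lc <= eps /\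
  psi x Lc tau (X x Lc tau) <= f1 x.

Definition Ldouble (LF : R) (i : nat) (L0 : R) : R :=
  iter i (fun l => Num.min (2 * l) (2 * LF)) L0.

Definition Linit (L : R) (Lk : nat -> R) (k : nat) : R :=
  if k is k'.+1 then Num.max (Lk k' / 2) L else L.

(* (x, Lk, tau) is a run of Scheme 2 with inputs x0, eps, L, LF, X:
   Lk k and tau k are the accepted weight and tau^* at iteration k. *)
Definition scheme2 (x0 : 'cV[R]_n) (eps : nat -> R) (L LF : R)
    (X : 'cV[R]_n -> R -> R -> 'cV[R]_n)
    (x : nat -> 'cV[R]_n) (Lk : nat -> R) (tau : nat -> R) : Prop :=
  x 0%N = x0 /\
  forall k : nat,
    0 <= eps k /\
    (exists j : nat,
        Lk k = Ldouble LF j (Linit L Lk k) /\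
        (* the j earlier attempts were all rejected *)
        (forall i : nat, (i < j)%N ->
           exists t, tau_search_ok X (eps k) (x k) (Ldouble LF i (Linit L Lk k)) t /\
             f1 (X (x k) (Ldouble LF i (Linit L Lk k)) t) >
             psi (x k) (Ldouble LF i (Linit L Lk k)) t
                 (X (x k) (Ldouble LF i (Linit L Lk k)) t))) /\
    tau_search_ok X (eps k) (x k) (Lk k) (tau k) /\
    x k.+1 = X (x k) (Lk k) (tau k) /\
    f1 (x k.+1) <= psi (x k) (Lk k) (tau k) (x k.+1).

Definition scheme2_fixed (x0 : 'cV[R]_n) (eps : nat -> R) (LF : R)
    (X : 'cV[R]_n -> R -> R -> 'cV[R]_n)
    (x : nat -> 'cV[R]_n) (Lk : nat -> R) (tau : nat -> R) : Prop :=
  x 0%N = x0 /\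
  forall k : nat,
    0 <= eps k /\ (Lk k = LF) /\
    tau_search_ok X (eps k) (x k) (Lk k) (tau k) /\
    x k.+1 = X (x k) (Lk k) (tau k).

End GaussNewton.

(* Main.v *)
Require Import Defs.
From HB Require Import structures.
From mathcomp Require Import all_boot all_order all_algebra.
From mathcomp Require Import all_classical all_reals all_analysis.
From mathcomp Require Import ring lra.
Import Order.TTheory GRing.Theory Num.Theory.
Import numFieldNormedType.Exports.
Local Open Scope classical_set_scope.
Local Open Scope ring_scope.
Set Implicit Arguments. Unset Strict Implicit. Unset Printing Implicit Defensive.

Section Aux.
Variable R : realType.

Lemma sumsq_ge0 k (a : 'I_k -> R) : 0 <= \sum_i a i ^+ 2.
Proof. by apply: sumr_ge0 => i _; rewrite sqr_ge0. Qed.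

Lemma CS2 k (a b : 'I_k -> R) :
  (\sum_i a i * b i) ^+ 2 <= (\sum_i a i ^+ 2) * (\sum_i b i ^+ 2).
Proof.
rewrite -subr_ge0.
pose x i j := a i ^+ 2 * b j ^+ 2 - a i * b i * (a j * b j).
have E : (\sum_i a i ^+ 2) * (\sum_i b i ^+ 2) - (\sum_i a i * b i) ^+ 2
         = \sum_i \sum_j x i j.
  rewrite expr2 !mulr_suml -sumrB; apply: eq_bigr => i _.
  rewrite !mulr_sumr -sumrB; apply: eq_bigr => j _; rewrite /x; ring.
rewrite E.
have E2 : \sum_i \sum_j (x i j + x j i) = (\sum_i \sum_j x i j) *+ 2.
  rewrite (eq_bigr (fun i => \sum_j x i j + \sum_j x j i)); last first.
    by move=> i _; rewrite big_split.
  by rewrite big_split /= [X in _ + X]exchange_big /= mulr2n.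
have : 0 <= \sum_i \sum_j (x i j + x j i).
  apply: sumr_ge0 => i _; apply: sumr_ge0 => j _.
  have -> : x i j + x j i = (a i * b j - a j * b i) ^+ 2 by rewrite /x; ring.
  exact: sqr_ge0.
by rewrite E2 pmulrn_lge0.
Qed.

Definition dotv k (u v : 'cV[R]_k) : R := \sum_i u i 0 * v i 0.

Lemma enorm_ge0 k (v : 'cV[R]_k) : 0 <= enorm v.
Proof. exact: sqrtr_ge0. Qed.

Lemma enorm_sq k (v : 'cV[R]_k) : enorm v ^+ 2 = \sum_i v i 0 ^+ 2.
Proof. by rewrite /enorm sqr_sqrtr // sumsq_ge0. Qed.

Lemma enorm_sqd k (v : 'cV[R]_k) : enorm v ^+ 2 = dotv v v.
Proof. by rewrite enorm_sq; apply: eq_bigr => i _; rewrite expr2. Qed.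

Lemma sq_le_nonneg (a b : R) : 0 <= b -> a ^+ 2 <= b ^+ 2 -> a <= b.
Proof. move=> hb h; nra. Qed.

Lemma dot_le k (u v : 'cV[R]_k) : `|dotv u v| <= enorm u * enorm v.
Proof.
apply: sq_le_nonneg; first by rewrite mulr_ge0 // enorm_ge0.
by rewrite real_normK ?num_real // exprMn !enorm_sq; apply: CS2.
Qed.

Lemma dot_le' k (u v : 'cV[R]_k) : dotv u v <= enorm u * enorm v.
Proof. exact: le_trans (ler_norm _) (dot_le u v). Qed.

Lemma enorm0 k : enorm (0 : 'cV[R]_k) = 0.
Proof. by rewrite /enorm big1 ?sqrtr0 // => i _; rewrite mxE expr0n. Qed.

Lemma enorm_eq0 k (v : 'cV[R]_k) : enorm v = 0 -> v = 0.
Proof.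
move=> h; have : enorm v ^+ 2 = 0 by rewrite h expr0n.
rewrite enorm_sq => /psumr_eq0P H.
apply/matrixP => i j; rewrite (ord1 j) mxE.
by apply/eqP; rewrite -sqrf_eq0; apply/eqP; apply: H => // l _; rewrite sqr_ge0.
Qed.

Lemma enormZ k (c : R) (v : 'cV[R]_k) : enorm (c *: v) = `|c| * enorm v.
Proof.
rewrite /enorm -sqrtr_sqr -sqrtrM ?sqr_ge0 //; congr Num.sqrt.
by rewrite mulr_sumr; apply: eq_bigr => i _; rewrite mxE exprMn.
Qed.

Lemma enormN k (v : 'cV[R]_k) : enorm (- v) = enorm v.
Proof. by rewrite -scaleN1r enormZ normrN normr1 mul1r. Qed.

Lemma enormB k (u v : 'cV[R]_k) : enorm (u - v) = enorm (v - u).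
Proof. by rewrite -enormN opprB. Qed.

Lemma dotvDsq k (u v : 'cV[R]_k) :
  enorm (u + v) ^+ 2 = enorm u ^+ 2 + 2 * dotv u v + enorm v ^+ 2.
Proof.
rewrite !enorm_sq /dotv mulr_sumr -!big_split /=; apply: eq_bigr => i _.
rewrite mxE; ring.
Qed.

Lemma enormD k (u v : 'cV[R]_k) : enorm (u + v) <= enorm u + enorm v.
Proof.
apply: sq_le_nonneg; first by rewrite addr_ge0 ?enorm_ge0.
rewrite dotvDsq; have := dot_le' u v; nra.
Qed.

Lemma enorm_mul p k (A : 'M[R]_(p, k)) (v : 'cV[R]_k) :
  enorm (A *m v) <= frob A * enorm v.
Proof.
apply: sq_le_nonneg; first by rewrite mulr_ge0 ?enorm_ge0 ?sqrtr_ge0.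
rewrite exprMn enorm_sq /frob sqr_sqrtr; last first.
  by apply: sumr_ge0 => i _; apply: sumr_ge0 => j _; rewrite sqr_ge0.
rewrite enorm_sq mulr_suml; apply: ler_sum => i _.
rewrite mxE; exact: CS2 (fun j => A i j) (fun j => v j 0).
Qed.

Lemma dot_tr k (u v : 'cV[R]_k) : dotv u v = (u^T *m v) 0 0.
Proof. by rewrite mxE; apply: eq_bigr => i _; rewrite mxE. Qed.


Lemma pinv p k (A : 'M[R]_(p, k)) (mu : R) : 0 < mu ->
  (forall u, Num.sqrt mu * enorm u <= enorm (A^T *m u)) ->
  forall v : 'cV[R]_p, exists h, A *m h = v /\ mu * enorm h ^+ 2 <= enorm v ^+ 2.
Proof.
move=> mu0 hs v.
pose M := A *m A^T.
have smu : 0 < Num.sqrt mu by rewrite sqrtr_gt0.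
have Mu : M \in unitmx.
  rewrite unitmxE unitfE; apply/negP => /det0P [r rn0 rM].
  have H : enorm (A^T *m r^T) = 0.
    apply/eqP; rewrite -sqrf_eq0 enorm_sqd dot_tr trmx_mul trmxK.
    by rewrite !trmxK !mulmxA -(mulmxA r A A^T) -/M rM mul0mx mxE.
  have := hs r^T; rewrite H => h1.
  have : enorm r^T = 0.
    apply/le_anti; rewrite enorm_ge0 andbT.
    by rewrite -(pmulr_rle0 _ smu).
  move/enorm_eq0 => /(congr1 trmx); rewrite trmxK trmx0 => r0.
  by move/eqP: rn0.
pose w := invmx M *m v.
exists (A^T *m w); split; first by rewrite mulmxA -/M mulKVmx.
have e1 : enorm (A^T *m w) ^+ 2 = dotv w v.
  rewrite enorm_sqd !dot_tr trmx_mul trmxK -!mulmxA (mulmxA A) -/M mulKVmx //.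
have e2 : enorm (A^T *m w) ^+ 2 <= enorm w * enorm v by rewrite e1 dot_le'.
have e3 : mu * enorm w ^+ 2 <= enorm (A^T *m w) ^+ 2.
  have h := hs w; have h' := enorm_ge0 w; have h'' := sqr_sqrtr (ltW mu0).
  rewrite -h''; set s := Num.sqrt mu in h h'' smu *.
  set a := enorm w in h h' *; set b := enorm _ in h *.
  have sa : 0 <= s * a by rewrite mulr_ge0 // ltW.
  have : (s * a) ^+ 2 <= b ^+ 2 by rewrite ler_pXn2r // ?nnegrE // (le_trans sa h).
  by rewrite exprMn.
have := enorm_ge0 w; have := enorm_ge0 v; set hh := enorm (A^T *m w) in e2 e3 *.
set a := enorm w in e2 e3 *; set b := enorm v in e2 *.
move=> hb ha.
have hh0 : 0 <= hh ^+ 2 by rewrite sqr_ge0.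
set H := hh ^+ 2 in e2 e3 hh0 *.
have [a0|a0] := eqVneq a 0.
  move: e2; rewrite a0 mul0r => e2.
  have -> : H = 0 by apply/le_anti; rewrite e2 hh0.
  by rewrite mulr0 sqr_ge0.
have apos : 0 < a by rewrite lt_def a0 ha.
have mab : mu * a <= b.
  have : mu * a * a <= b * a by nra.
  by rewrite ler_pM2r.
nra.
Qed.


Lemma sigma_pt q p (A : 'M[R]_(q, p)) (mu : R) :
  Num.sqrt mu <= sigma_min A -> forall u, Num.sqrt mu * enorm u <= enorm (A *m u).
Proof.
move=> hs u.
have [e0|en0] := eqVneq (enorm u) 0.
  by rewrite e0 mulr0 enorm_ge0.
have epos : 0 < enorm u by rewrite lt_def en0 enorm_ge0.
have lb : has_lbound [set enorm (A *m u) | u in [set u : 'cV[R]_p | enorm u = 1]].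
  by exists 0 => y [v _ <-]; rewrite enorm_ge0.
have := ge_inf lb (x := enorm (A *m ((enorm u)^-1 *: u))).
rewrite -/(sigma_min A) => h.
have : sigma_min A <= enorm (A *m ((enorm u)^-1 *: u)).
  apply: h; exists ((enorm u)^-1 *: u) => //=.
  by rewrite enormZ ger0_norm ?invr_ge0 ?enorm_ge0 // mulVf.
rewrite -scalemxAr enormZ ger0_norm ?invr_ge0 ?enorm_ge0 // => h2.
have := le_trans hs h2.
by rewrite -ler_pdivlMr // mulrC.
Qed.


Section Psi.
Variables (n m : nat) (F : 'cV[R]_n -> 'cV[R]_m) (J : 'cV[R]_n -> 'M[R]_(m, n)).

Lemma phi_ge0 x y : 0 <= phi F J x y.
Proof. exact: enorm_ge0. Qed.

Lemma psi_ge0 x L tau y : 0 <= L -> 0 < tau -> 0 <= psi F J x L tau y.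
Proof.
move=> L0 t0; rewrite /psi; apply: addr_ge0; first apply: addr_ge0.
- by rewrite divr_ge0 // ltW.
- by rewrite divr_ge0 ?sqr_ge0 // mulr_ge0 // ltW.
- by rewrite mulr_ge0 ?sqr_ge0 // divr_ge0.
Qed.

Lemma psi_opt_le x L tau y : 0 <= L -> 0 < tau ->
  psi_opt F J x L <= psi F J x L tau y.
Proof.
move=> L0 t0.
have lb : has_lbound [set r | exists tau y, 0 < tau /\ r = psi F J x L tau y].
  by exists 0 => r [t [z [t0' ->]]]; apply: psi_ge0.
by apply: (ge_inf lb); exists tau, y.
Qed.


Lemma psi_opt_phi x L y : 0 <= L ->
  psi_opt F J x L <= phi F J x y + L / 2 * enorm (y - x) ^+ 2.
Proof.
move=> L0; set p := phi F J x y.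
have [p0|pn0] := eqVneq p 0.
  apply/ler_addgt0Pr => e e0.
  apply: le_trans (psi_opt_le x y L0 e0) _.
  rewrite /psi -/p p0 expr0n /= mul0r add0r addrC lerD2l; lra.
have ppos : 0 < p by rewrite lt_def pn0 phi_ge0.
apply: le_trans (psi_opt_le x y L0 ppos) _.
rewrite /psi -/p lerD2r.
have -> : p ^+ 2 / (2 * p) = p / 2 by field; rewrite gt_eqF.
lra.
Qed.

Lemma psi_ge_phi x L tau y : 0 < tau ->
  phi F J x y + L / 2 * enorm (y - x) ^+ 2 <= psi F J x L tau y.
Proof.
move=> t0; rewrite /psi lerD2r; set p := phi F J x y.
have -> : tau / 2 + p ^+ 2 / (2 * tau) = p + (tau - p) ^+ 2 / (2 * tau).
  by field; rewrite gt_eqF.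
by rewrite lerDl divr_ge0 ?sqr_ge0 // mulr_ge0 // ltW.
Qed.

Lemma gn_bound x L mu t : 0 < mu -> Num.sqrt mu <= sigma_min (Jhat J x)^T ->
  0 <= L -> 0 <= t <= 1 ->
  psi_opt F J x L <= (1 - t) * f1 F x + L * t ^+ 2 * f1 F x ^+ 2 / (2 * mu).
Proof.
move=> mu0 hs L0 /andP[t0 t1].
have [h [hJ hn]] := pinv mu0 (sigma_pt hs) (- Fhat F x).
rewrite enormN -/(f1 F x) in hn.
apply: le_trans (psi_opt_phi x (x + t *: h) L0) _.
rewrite /phi addrAC subrr add0r -scalemxAr hJ.
have -> : Fhat F x + t *: - Fhat F x = (1 - t) *: Fhat F x.
  by rewrite scalerBl scale1r scalerN.
rewrite (enormZ (1 - t) (Fhat F x)) (enormZ t h) -/(f1 F x) (ger0_norm t0) ger0_norm ?subr_ge0 // lerD2l.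
have hh : enorm h ^+ 2 <= f1 F x ^+ 2 / mu by rewrite ler_pdivlMr // mulrC.
have -> : L * t ^+ 2 * f1 F x ^+ 2 / (2 * mu) = L / 2 * (t ^+ 2 * (f1 F x ^+ 2 / mu)).
  by field; rewrite gt_eqF.
rewrite exprMn; apply: ler_wpM2l; first by rewrite divr_ge0.
by apply: ler_wpM2l => //; rewrite sqr_ge0.
Qed.

End Psi.


Lemma final_arith (P f Lm mu : R) : 0 <= f -> 0 < Lm -> 0 < mu ->
  (forall t, 0 <= t <= 1 -> P <= (1 - t) * f + Lm * t ^+ 2 * f ^+ 2 / (2 * mu)) ->
  (f <= mu / Lm -> P <= Lm * f ^+ 2 / (2 * mu) /\ Lm * f ^+ 2 / (2 * mu) <= f / 2) /\
  (mu / Lm < f -> P <= f - mu / (2 * Lm)).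
Proof.
move=> f0 L0 mu0 H; split.
  move=> hf; split.
    have := H 1; rewrite ler01 lexx subrr mul0r add0r expr1n mulr1; exact.
  rewrite ler_pdivlMr in hf => //.
  rewrite ler_pdivrMr ?mulr_gt0 //.
  have : Lm * f * f <= mu * f by rewrite ler_wpM2r // mulrC.
  move=> h; nra.
move=> hf.
have fpos : 0 < f by apply: le_lt_trans hf; rewrite divr_ge0 // ltW.
have t0 : 0 <= mu / (Lm * f) by rewrite divr_ge0 ?mulr_ge0 // ltW.
have t1 : mu / (Lm * f) <= 1.
  by rewrite ler_pdivrMr ?mulr_gt0 // mul1r mulrC -ler_pdivrMr // ltW.
have := H (mu / (Lm * f)); rewrite t0 t1 => /(_ isT).
suff -> : (1 - mu / (Lm * f)) * f + Lm * (mu / (Lm * f)) ^+ 2 * f ^+ 2 / (2 * mu)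
   = f - mu / (2 * Lm) by [].
by field; rewrite !gt_eqF.
Qed.


Lemma is_derive_quad (c K t : R) :
  is_derive t 1 (fun s : R => c * s + K * s ^+ 2) (c + K * (2 * t)).
Proof.
have := is_deriveD (is_deriveZ c (is_derive_id t (1:R)))
  (is_deriveZ K (is_deriveX 2 (is_derive_id t (1:R)))).
set f := (_ + _ : R -> R).
have -> : f = (fun s : R => c * s + K * s ^+ 2).
  by apply/funext => s; rewrite /f /= expr2.
move=> h; apply: is_derive_eq h _.
by rewrite /= expr1 /GRing.scale /= !mulr1.
Qed.

Section Taylor.
Variables (n m : nat) (F : 'cV[R]_n -> 'cV[R]_m) (J : 'cV[R]_n -> 'M[R]_(m, n)).
Hypothesis hd : forall z, differentiable F z /\
  ('d F z : 'cV[R]_n -> 'cV[R]_m) = (fun h => J z *m h).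

Lemma dotv_linear (r : 'cV[R]_m) : linear (dotv r).
Proof.
move=> a u v; rewrite /dotv /GRing.scale /= mulr_sumr -big_split /=.
by apply: eq_bigr => i _; rewrite !mxE; ring.
Qed.

Lemma dotv_cont (r : 'cV[R]_m) : continuous (dotv r).
Proof.
move=> z.
rewrite (_ : dotv r = \sum_(i < m) (fun v : 'cV[R]_m => r i 0 * v i 0)); last first.
  by rewrite fct_sumE; apply/funext.
apply: (big_ind (fun f => {for z, continuous f})).
- exact: cst_continuous.
- by move=> f g; apply: continuousD.
- move=> i _; apply: (@continuousM _ _ (cst (r i 0)) (fun v : 'cV[R]_m => v i 0)).
  + exact: cst_continuous.
  + exact: coord_continuous.
Qed.

Definition sc := (Num.sqrt (m%:R : R))^-1.

Lemma Fhat_diff z : differentiable (Fhat F) z /\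
  ('d (Fhat F) z : 'cV[R]_n -> 'cV[R]_m) = (fun h => Jhat J z *m h).
Proof.
have -> : Fhat F = sc *: F by apply/funext.
have [d1 d2] := hd z.
split; first exact: differentiableZ.
rewrite diffZ // d2; apply/funext => h /=.
by rewrite /Jhat scalemxAl.
Qed.

Lemma G_diff (r : 'cV[R]_m) z :
  differentiable (fun v => dotv r (Fhat F v)) z /\ ('d (fun v => dotv r (Fhat F v)) z : 'cV[R]_n -> R) =
     (fun h => dotv r (Jhat J z *m h)).
Proof.
pose pL : {linear 'cV[R]_m -> R} :=
  HB.pack (dotv r) (GRing.isLinear.Build _ _ _ _ (dotv r) (dotv_linear r)).
have [dF dFd] := Fhat_diff z.
have dp : differentiable pL (Fhat F z).
  by apply: linear_differentiable; exact: (@dotv_cont r).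
have -> : (fun v => dotv r (Fhat F v)) = pL \o Fhat F by [].
split; first exact: differentiable_comp.
by rewrite diff_comp // dFd diff_lin //; exact: (@dotv_cont r).
Qed.

Lemma g_derive (r : 'cV[R]_m) y h t :
  is_derive t (1:R) (fun s : R => dotv r (Fhat F (y + s *: h)))
    (dotv r (Jhat J (y + t *: h) *m h)).
Proof.
set G := (fun v => dotv r (Fhat F v)).
set g := (fun s : R => G (y + s *: h)).
have [dG dGd] := G_diff r (y + t *: h).
have dGh : derivable G (y + t *: h) h by apply: diff_derivable.
have eqf : (fun s : R => s^-1 *: ((g \o shift t) (s *: 1) - g t)) =
           (fun s : R => s^-1 *: ((G \o shift (y + t *: h)) (s *: h) - G (y + t *: h))).
  apply/funext => s; rewrite /g /= scalerDl.
  by rewrite [s *: 1]/GRing.scale /= mulr1 addrCA.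
apply: DeriveDef.
  by rewrite /derivable eqf.
by rewrite /derive eqf -/(derive G (y + t *: h) h) deriveE // dGd.
Qed.

Lemma dotvB (r a b : 'cV[R]_m) : dotv r (a - b) = dotv r a - dotv r b.
Proof. by rewrite /dotv -sumrB; apply: eq_bigr => i _; rewrite !mxE; ring. Qed.

Lemma taylor (Fset : set 'cV[R]_n) (LF : R) : 0 <= LF -> convex_set_E Fset ->
  (forall y z, Fset y -> Fset z -> frob (Jhat J y - Jhat J z) <= LF * enorm (y - z)) ->
  forall y z, Fset y -> Fset z ->
  enorm (Fhat F z - Fhat F y - Jhat J y *m (z - y)) <= LF / 2 * enorm (z - y) ^+ 2.
Proof.
move=> LF0 cvx lip y z Fy Fz.
set h := z - y.
set r := Fhat F z - Fhat F y - Jhat J y *m h.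
set c0 := dotv r (Jhat J y *m h).
set K := LF * enorm h ^+ 2 * enorm r.
set k := (fun s : R => dotv r (Fhat F (y + s *: h)) - (c0 * s + K / 2 * s ^+ 2)).
have dk : forall s, is_derive s (1:R) k
    (dotv r (Jhat J (y + s *: h) *m h) - (c0 + K / 2 * (2 * s))).
  move=> s; exact: is_deriveB (g_derive r y h s) (is_derive_quad c0 (K / 2) s).
have dl : forall s : R, s \in `]0, 1[ -> derive1 k s <= 0.
  move=> s; rewrite in_itv /= => /andP[s0 s1].
  rewrite derive1E derive_val subr_le0.
  have Fs : Fset (y + s *: h).
    have -> : y + s *: h = s *: z + (1 - s) *: y.
      by apply/matrixP => i j; rewrite !mxE; ring.
    by apply: cvx => //; rewrite (ltW s0) (ltW s1).
  rewrite -lerBlDl /c0 -dotvB -mulmxBl.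
  apply: le_trans (dot_le' _ _) _.
  have hn := enorm_ge0 h; have rn := enorm_ge0 r.
  have e1 := enorm_mul (Jhat J (y + s *: h) - Jhat J y) h.
  have e2 := lip _ _ Fs Fy.
  rewrite [y + s *: h - y]addrAC subrr add0r enormZ (ger0_norm (ltW s0)) in e2.
  have e3 : frob (Jhat J (y + s *: h) - Jhat J y) * enorm h <= LF * (s * enorm h) * enorm h.
    by rewrite ler_wpM2r.
  have e4 := le_trans e1 e3.
  have : enorm r * enorm ((Jhat J (y + s *: h) - Jhat J y) *m h)
      <= enorm r * (LF * (s * enorm h) * enorm h) by rewrite ler_wpM2l.
  move/le_trans; apply; rewrite /K le_eqVlt; apply/orP; left; apply/eqP; rewrite expr2; by field.
have dd : {in `]0, 1[, forall u : R, derivable k u 1} by move=> u _.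
have dd' : {in `[0, 1], forall u : R, derivable k u 1} by move=> u _.
have ct := derivable_within_continuous dd'.

have mono := ler0_derive1_le_cc dd dl ct.
have i0 : (0:R) \in `[0, 1] by rewrite in_itv /= lexx ler01.
have i1 : (1:R) \in `[0, 1] by rewrite in_itv /= lexx ler01.
have := mono 1 0 i1 i0 ler01.
rewrite /k scale0r addr0 scale1r mulr0 mulr1 expr1n expr0n /= mulr0 addr0 subr0.
rewrite {1}/h [y + (z - y)]addrC subrK => H.
have e : enorm r ^+ 2 <= K / 2.
  rewrite enorm_sqd {2}/r !dotvB -/c0; lra.
have r0 := enorm_ge0 r.
move: e; rewrite /K -/h; set a := enorm r; set b := LF * enorm h ^+ 2.
move=> e.
have [a0|an0] := eqVneq a 0.
  by rewrite a0 mulr_ge0 ?divr_ge0 ?sqr_ge0.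
have apos : 0 < a by rewrite lt_def an0.
have : a * a <= (b / 2) * a by move: e; rewrite expr2 mulrAC.
by rewrite ler_pM2r // /b mulrAC.
Qed.

End Taylor.


Lemma Ldouble_pos (LF l : R) j : 0 < LF -> 0 < l -> 0 < Ldouble LF j l.
Proof.
move=> LF0 l0; elim: j => [//|j IH] /=.
by rewrite lt_min !mulr_gt0.
Qed.

Lemma Ldouble_le (LF l : R) j : Ldouble LF j l <= Num.max l (2 * LF).
Proof.
case: j => [|j] /=; first by rewrite le_max lexx.
by rewrite le_max; apply/orP; right; rewrite ge_min; apply/orP; right.
Qed.


End Aux.

Theorem theorem9 (R : realType) (n m : nat)
    (F : 'cV[R]_n -> 'cV[R]_m) (J : 'cV[R]_n -> 'M[R]_(m, n))
    (Fset : set 'cV[R]_n) (LF mu L : R) (x0 : 'cV[R]_n) (eps : nat -> R)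
    (X : 'cV[R]_n -> R -> R -> 'cV[R]_n)
    (x : nat -> 'cV[R]_n) (Lk : nat -> R) (tau : nat -> R) :
  (0 < m)%N ->
  (* F is differentiable with Jacobian J *)
  (forall z, differentiable F z /\ ('d F z : 'cV[R]_n -> 'cV[R]_m) = (fun h => J z *m h)) ->
  (* the set \mathcal F: closed, convex, nonempty interior *)
  closed Fset -> convex_set_E Fset -> (Fset°) !=set0 ->
  level_set F (f1 F x0) `<=` Fset ->
  (* Lipschitz Jacobian and sigma_min bound on \mathcal F *)
  (forall y z, Fset y -> Fset z -> frob (Jhat J y - Jhat J z) <= LF * enorm (y - z)) ->
  0 < mu ->
  (forall z, Fset z -> Num.sqrt mu <= sigma_min (Jhat J z)^T) ->
  0 < L -> L <= LF ->
  (forall k, Fset (x k)) ->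
  (scheme2 F J x0 eps L LF X x Lk tau ->
   forall k : nat,
     (f1 F (x k) <= mu / (2 * LF) ->
        f1 F (x k.+1) <= eps k + LF / mu * f2 F (x k) /\
        LF / mu * f2 F (x k) <= f1 F (x k) / 2) /\
     (mu / (2 * LF) < f1 F (x k) ->
        f1 F (x k.+1) <= eps k + (f1 F (x k) - mu / (4 * LF)))) /\
  (scheme2_fixed F J x0 eps LF X x Lk tau ->
   forall k : nat,
     (f1 F (x k) <= mu / LF ->
        f1 F (x k.+1) <= eps k + LF / (2 * mu) * f2 F (x k) /\
        LF / (2 * mu) * f2 F (x k) <= f1 F (x k) / 2) /\
     (mu / LF < f1 F (x k) ->
        f1 F (x k.+1) <= eps k + (f1 F (x k) - mu / (2 * LF)))).
Proof.
move=> m0 hd _ cvx _ _ lip mu0 sig L0 LLF xF.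
have LF0 : 0 < LF by apply: lt_le_trans LLF.
have f0 : forall k, 0 <= f1 F (x k) by move=> k; exact: enorm_ge0.
split.
  move=> [_ Hs].
  have Lbd : forall k, 0 < Lk k <= 2 * LF.
    elim=> [|k IH].
      have [_ [[j [-> _]] _]] := Hs 0%N.
      rewrite Ldouble_pos //=; apply: le_trans (Ldouble_le _ _ _) _.
      by rewrite ge_max lexx andbT; lra.
    have [_ [[j [-> _]] _]] := Hs k.+1.
    have li : 0 < Linit L Lk k.+1 <= 2 * LF.
      rewrite /= lt_max L0 orbT /= ge_max; case/andP: IH => _ IH; apply/andP; split; lra.
    case/andP: li => li1 li2.
    rewrite Ldouble_pos //=; apply: le_trans (Ldouble_le _ _ _) _.
    by rewrite ge_max lexx andbT.
  move=> k.
  have [_ [_ [[tau0 [Hopt Hf]] [xk1 Hacc]]]] := Hs k.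
  have [Lk0 Lk2] := andP (Lbd k).
  set f := f1 F (x k).
  have H : forall t, 0 <= t <= 1 -> f1 F (x k.+1) - eps k <=
       (1 - t) * f + (2 * LF) * t ^+ 2 * f ^+ 2 / (2 * mu).
    move=> t t01.
    have g := gn_bound F (J:=J) (x:=x k) mu0 (sig _ (xF k)) (ltW Lk0) t01.
    have g2 : Lk k * t ^+ 2 * f ^+ 2 / (2 * mu) <= (2 * LF) * t ^+ 2 * f ^+ 2 / (2 * mu).
      rewrite ler_pM2r ?invr_gt0 ?mulr_gt0 //.
      by apply: ler_wpM2r; rewrite ?sqr_ge0 //; apply: ler_wpM2r; rewrite ?sqr_ge0.
    rewrite xk1 in Hacc *.
    rewrite -/f in g; lra.
  have L2 : 0 < 2 * LF by rewrite mulr_gt0.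
  have := final_arith (f0 k) L2 mu0 H.
  move=> [Ha Hb]; split.
    move=> hf; have [h1 h2] := Ha hf.
    have e : 2 * LF * f ^+ 2 / (2 * mu) = LF / mu * f2 F (x k).
      by rewrite /f2 -/f; field; rewrite !gt_eqF.
    rewrite -e; split; last by [].
    rewrite /f; lra.
  move=> hf; have := Hb hf.
  have -> : mu / (2 * (2 * LF)) = mu / (4 * LF) by field; rewrite gt_eqF.
  rewrite /f; lra.
move=> [_ Hs] k.
have [_ [LkF [[tau0 [Hopt Hf]] xk1]]] := Hs k.
rewrite LkF in Hopt xk1; rewrite -xk1 in Hopt.
have T := taylor hd (ltW LF0) cvx lip (xF k) (xF k.+1).
have fz : f1 F (x k.+1) <= phi F J (x k) (x k.+1) + LF / 2 * enorm (x k.+1 - x k) ^+ 2.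
  rewrite /f1 /phi.
  set b := Fhat F (x k.+1) - Fhat F (x k) - Jhat J (x k) *m (x k.+1 - x k) in T *.
  have -> : Fhat F (x k.+1) = (Fhat F (x k) + Jhat J (x k) *m (x k.+1 - x k)) + b.
    by rewrite /b; apply/matrixP => i j; rewrite !mxE; ring.
  by apply: le_trans (enormD _ _) _; rewrite lerD2l.
have pp := psi_ge_phi F J (x k) LF (x k.+1) tau0.
set f := f1 F (x k).
have H : forall t, 0 <= t <= 1 -> f1 F (x k.+1) - eps k <=
     (1 - t) * f + LF * t ^+ 2 * f ^+ 2 / (2 * mu).
  move=> t t01.
  have g := gn_bound F (J:=J) (x:=x k) mu0 (sig _ (xF k)) (ltW LF0) t01.
  rewrite -/f in g; lra.
have := final_arith (f0 k) LF0 mu0 H.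
move=> [Ha Hb]; split.
  move=> hf; have [h1 h2] := Ha hf.
  have e : LF * f ^+ 2 / (2 * mu) = LF / (2 * mu) * f2 F (x k).
    by rewrite /f2 -/f; field; rewrite !gt_eqF.
  rewrite -e; split; last by [].
  rewrite /f; lra.
move=> hf; have := Hb hf.
rewrite /f; lra.
Qed.
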